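(* Let $d\ge 3$ be odd. The abelianization $G_d/G_d'$ is isomorphic to $\mathbb Z^d$; more precisely, the elements $a_1^{i_1}a_2^{i_2}\cdots a_d^{i_d}$, $(i_1,\dots,i_d)\in\mathbb Z^d$, form a complete set of pairwise distinct coset representatives of $G_d'$ in $G_d$.
   Context: Let $d\ge 3$, $X=\{1,\dots,d\}$, $T$ the $d$-regular rooted tree with vertex set $X^*$. $\mathrm{Aut}(T)$ is the group of root-preserving automorphisms with product left-to-right: $(gh)(u)=h(g(u))$. Sections $g|_u$ are defined by $g(uv)=g(u)\,g|_u(v)$; we write $g=(g|_1,\dots,g|_d)\lambda_g$ with $\lambda_g\in S_d$ the action on the first level; $e$ is the identity; $\overline{j}\in\{1,\dots,d\}$ denotes $j$ mod $d$. $G_d=\langle a_1,\dots,a_d\rangle\le\mathrm{Aut}(T)$ where $a_i$ acts on the first level as $(i\ \overline{i+1})$, with $a_i|_i=a_i$, $a_i|_{\overline{i+1}}=a_{\overline{i+1}}$, and $a_i|_x=e$ otherwise. $G_d'$ denotes the commutator subgroup. *)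

(* Defs.v *)
From HB Require Import structures.
From mathcomp Require Import all_boot all_order all_algebra.
Set Implicit Arguments. Unset Strict Implicit. Unset Printing Implicit Defensive.

(* Letters of the alphabet X = {1,...,d} are represented by 'I_d = {0,...,d-1}
   (letter k+1 <-> ordinal k).  Vertices of T are words w : seq 'I_d.
   ordS i is i+1 mod d (cyclically), i.e. \overline{i+1}. *)

Fixpoint a_act (d : nat) (i : 'I_d) (w : seq 'I_d) {struct w} : seq 'I_d :=
  match w with
  | [::] => [::]
  | x :: w' =>
      if x == i then ordS i :: a_act i w'
      else if x == ordS i then i :: a_act (ordS i) w'
      else x :: w'
  end.

Fixpoint ainv_act (d : nat) (i : 'I_d) (w : seq 'I_d) {struct w} : seq 'I_d :=
  match w with
  | [::] => [::]
  | x :: w' =>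
      if x == ordS i then i :: ainv_act i w'
      else if x == i then ordS i :: ainv_act (ordS i) w'
      else x :: w'
  end.

(* a letter of a group word: (i, false) = a_i, (i, true) = a_i^{-1} *)
Definition gen (d : nat) := ('I_d * bool)%type.

Definition gen_act (d : nat) (x : gen d) (w : seq 'I_d) : seq 'I_d :=
  if x.2 then ainv_act x.1 w else a_act x.1 w.

(* the tree automorphism represented by a group word; products are read
   left to right: (gh)(u) = h(g(u)) *)
Definition eval (d : nat) (s : seq (gen d)) (u : seq 'I_d) : seq 'I_d :=
  foldl (fun v x => gen_act x v) u s.

Definition winv (d : nat) (s : seq (gen d)) : seq (gen d) :=
  rev (map (fun x => (x.1, ~~ x.2)) s).

Definition wcomm (d : nat) (s t : seq (gen d)) : seq (gen d) :=
  winv s ++ winv t ++ s ++ t.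

Definition in_comm (d : nat) (f : seq 'I_d -> seq 'I_d) : Prop :=
  exists cs : seq (seq (gen d) * seq (gen d) * bool),
    eval (flatten [seq (if c.2 then winv (wcomm c.1.1 c.1.2) else wcomm c.1.1 c.1.2)
                  | c <- cs]) =1 f.

Definition wpow (d : nat) (i : 'I_d) (n : int) : seq (gen d) :=
  match n with
  | Posz k => nseq k (i, false)
  | Negz k => nseq k.+1 (i, true)
  end.

Definition rep (d : nat) (v : 'I_d -> int) : seq (gen d) :=
  flatten [seq wpow i (v i) | i <- enum 'I_d].

(* Main.v *)
Require Import Defs.
From mathcomp Require Import all_boot all_order all_algebra.
From mathcomp Require Import zify.
Set Implicit Arguments. Unset Strict Implicit. Unset Printing Implicit Defensive.

Lemma vS d (i : 'I_d) : val (ordS i) = if i.+1 == d then 0 else i.+1.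
Proof.
rewrite /=; have := ltn_ord i; case: eqP => [->|ne] h; first by rewrite modnn.
rewrite modn_small //; lia.
Qed.

Ltac ordsolve := repeat (rewrite ?vS /=); repeat (case: eqP); try lia.

Lemma F1 d (i : 'I_d) : 1 < d -> ordS i != i.
Proof. move=> hd; apply/eqP => /(congr1 val); have := ltn_ord i; ordsolve. Qed.

Lemma F2 d (i : 'I_d) : 2 < d -> ordS (ordS i) != i.
Proof. move=> hd; apply/eqP => /(congr1 val); have := ltn_ord i; ordsolve. Qed.

Definition tr d (i p : 'I_d) : 'I_d := if p == i then ordS i else if p == ordS i then i else p.
Definition mv d (i p : 'I_d) : bool := (p == i) || (p == ordS i).
Definition sl d (x : gen d) (p : 'I_d) : gen d := (if x.2 then tr x.1 p else p, x.2).
Fixpoint lam d (s : seq (gen d)) (p : 'I_d) : 'I_d :=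
  match s with [::] => p | x :: s' => lam s' (tr x.1 p) end.
Fixpoint sect d (s : seq (gen d)) (p : 'I_d) : seq (gen d) :=
  match s with
  | [::] => [::]
  | x :: s' => if mv x.1 p then sl x p :: sect s' (tr x.1 p) else sect s' (tr x.1 p)
  end.

Lemma gen_act_cons d (x : gen d) p u : 1 < d ->
  gen_act x (p :: u) = tr x.1 p :: (if mv x.1 p then gen_act (sl x p) u else u).
Proof.
move=> hd; case: x => i e; have h1 := F1 i hd.
have h2 : (i == ordS i) = false by rewrite eq_sym; exact: negbTE.
rewrite /gen_act /sl /mv /tr /=.
case: (p =P i) => [->|ne]; first by case: e; rewrite /= ?eqxx ?h2 /= ?eqxx.
case: (p =P ordS i) => [->|ne2]; first by case: e; rewrite /= ?eqxx ?h2 /= ?(negbTE h1) ?eqxx.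
by case: e.
Qed.

Lemma eval_cons d (s : seq (gen d)) p u : 1 < d ->
  eval s (p :: u) = lam s p :: eval (sect s p) u.
Proof.
move=> hd; elim: s p u => [|x s IH] p u //=.
rewrite /eval /= -/(eval _ _) gen_act_cons // IH.
by case: (mv x.1 p).
Qed.

Lemma tr_inv d (i p : 'I_d) : 1 < d -> tr i (tr i p) = p.
Proof.
move=> hd; have h1 := negbTE (F1 i hd).
rewrite /tr; case: (p =P i) => [->|ne].
  by rewrite eqxx h1.
case: (p =P ordS i) => [->|ne2]; first by rewrite eqxx.
by move/eqP/negbTE: ne => ->; move/eqP/negbTE: ne2 => ->.
Qed.

Lemma tr_inj d (i : 'I_d) : 1 < d -> injective (tr i).
Proof. by move=> hd; apply: (can_inj (g := tr i)) => p; apply: tr_inv. Qed.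

Lemma sum2n d (F : 'I_d -> nat) a b : a != b ->
  (forall p, p != a -> p != b -> F p = 0) -> \sum_p F p = F a + F b.
Proof.
move=> hab F0; rewrite (bigD1 a) // (bigD1 b) /=; last by rewrite eq_sym.
rewrite big1 ?addn0 //.
by move=> p /andP[ha hb]; apply: F0.
Qed.

Lemma sum2z d (F : 'I_d -> int) a b : a != b ->
  (forall p, p != a -> p != b -> F p = 0%R) -> (\sum_p F p = F a + F b)%R.
Proof.
move=> hab F0; rewrite (bigD1 a) // (bigD1 b) /=; last by rewrite eq_sym.
rewrite big1 ?GRing.addr0 //.
by move=> p /andP[ha hb]; apply: F0.
Qed.

Lemma size_sect d (s : seq (gen d)) p : size (sect s p) <= size s.
Proof.
elim: s p => [|x s IH] p //=; case: (mv _ _) => /=; last exact: leqW.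
by rewrite ltnS.
Qed.

Lemma sum_size d (s : seq (gen d)) : 1 < d -> \sum_p size (sect s p) = 2 * size s.
Proof.
move=> hd; elim: s => [|x s IH] /=; first by rewrite big1.
have -> : \sum_p size (sect (x :: s) p) =
   \sum_p (mv x.1 p : nat) + \sum_p size (sect s (tr x.1 p)).
  rewrite -big_split /=; apply: eq_bigr => p _ /=.
  by case: (mv x.1 p).
have -> : \sum_p size (sect s (tr x.1 p)) = \sum_p size (sect s p).
  by rewrite [RHS](reindex_inj (tr_inj (i:=x.1) hd)).
rewrite IH.
rewrite (sum2n _ (a := x.1) (b := ordS x.1)); last 2 first.
- by rewrite eq_sym; apply: F1.
- by move=> p /negbTE h1 /negbTE h2; rewrite /mv h1 h2.
rewrite /mv !eqxx orbT /=; lia.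
Qed.

Definition sgn (e : bool) : int := if e then (-1)%R else 1%R.
Fixpoint exc d (s : seq (gen d)) (m : 'I_d) : int :=
  match s with
  | [::] => 0%R
  | x :: s' => ((if x.1 == m then sgn x.2 else 0) + exc s' m)%R
  end.
Fixpoint exS d (s : seq (gen d)) (m : 'I_d) : int :=
  match s with
  | [::] => 0%R
  | x :: s' => ((if ordS x.1 == m then sgn x.2 else 0) + exS s' m)%R
  end.

Lemma tr_self d (i : 'I_d) : tr i i = ordS i.
Proof. by rewrite /tr eqxx. Qed.
Lemma tr_S d (i : 'I_d) : 1 < d -> tr i (ordS i) = i.
Proof. by move=> hd; rewrite /tr (negbTE (F1 i hd)) eqxx. Qed.

Lemma sum_exc d (s : seq (gen d)) m : 1 < d ->
  (\sum_p exc (sect s p) m = exc s m + exS s m)%R.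
Proof.
move=> hd; elim: s => [|x s IH] /=; first by rewrite big1.
have -> : (\sum_p exc (sect (x :: s) p) m =
   \sum_p (if mv x.1 p then (if (sl x p).1 == m then sgn x.2 else 0) else 0)
   + \sum_p exc (sect s (tr x.1 p)) m)%R.
  rewrite -big_split /=; apply: eq_bigr => p _ /=.
  by case: (mv x.1 p); rewrite /= ?GRing.add0r.
have -> : (\sum_p exc (sect s (tr x.1 p)) m = \sum_p exc (sect s p) m)%R.
  by rewrite [RHS](reindex_inj (tr_inj (i:=x.1) hd)).
rewrite IH.
rewrite (sum2z _ (a := x.1) (b := ordS x.1)); last 2 first.
- by rewrite eq_sym; apply: F1.
- by move=> p /negbTE h1 /negbTE h2; rewrite /mv h1 h2.
rewrite /mv !eqxx orbT /= /sl tr_self tr_S //.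
by case: x.2; case: (x.1 == m); case: (ordS x.1 == m); rewrite /sgn; lia.
Qed.

Lemma exS_ordS d (s : seq (gen d)) j : exS s (ordS j) = exc s j.
Proof. by elim: s => [|x s IH] //=; rewrite IH (inj_eq (@ordS_inj d)). Qed.

Lemma iterS_val d (j : 'I_d) k : val (iter k (@ordS d) j) = (j + k) %% d.
Proof.
elim: k => [|k IH] /=; first by rewrite addn0 modn_small.
by rewrite IH -addn1 modnDml addn1 addnS.
Qed.

Lemma iter_d d (j : 'I_d) : iter d (@ordS d) j = j.
Proof. by apply: val_inj; rewrite iterS_val modnDr modn_small. Qed.

Lemma alt_zero d (v : 'I_d -> int) : odd d ->
  (forall j, v (ordS j) + v j = 0)%R -> forall j, v j = 0%R.
Proof.
move=> hodd hv j.
have H : forall k, v (iter k (@ordS d) j) = if odd k then (- v j)%R else v j.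
  elim=> [|k IH] //=; have := hv (iter k (@ordS d) j); rewrite IH.
  by case: (odd k) => /=; lia.
by have := H d; rewrite iter_d hodd; lia.
Qed.

Definition flip d (x : gen d) : gen d := (x.1, ~~ x.2).

Lemma eval_cat d (s t : seq (gen d)) u : eval (s ++ t) u = eval t (eval s u).
Proof. by rewrite /eval foldl_cat. Qed.

Lemma eval_cons1 d (x : gen d) s u : eval (x :: s) u = eval s (gen_act x u).
Proof. by []. Qed.

Lemma mv_tr d (i p : 'I_d) : 1 < d -> mv i (tr i p) = mv i p.
Proof.
move=> hd; rewrite /mv /tr; case: (p =P i) => [->|ne].
  by rewrite !eqxx !orbT.
case: (p =P ordS i) => [e2|ne2]; first by rewrite eqxx.
by move/eqP/negbTE: ne => ->; move/eqP/negbTE: ne2 => ->.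
Qed.

Lemma gen_actK d (x : gen d) w : 1 < d -> gen_act (flip x) (gen_act x w) = w.
Proof.
move=> hd; elim: w x => [|p u IH] x; first by case: x => i [].
rewrite gen_act_cons // gen_act_cons //= tr_inv // mv_tr //.
case: (mv x.1 p) => //.
have -> : sl (flip x) (tr x.1 p) = flip (sl x p).
  by rewrite /sl /flip /=; case: x.2 => //=; rewrite tr_inv.
by rewrite IH.
Qed.

Lemma flipK d : involutive (@flip d).
Proof. by case=> i e; rewrite /flip /= negbK. Qed.

Lemma winv_cat d (s t : seq (gen d)) : winv (s ++ t) = winv t ++ winv s.
Proof. by rewrite /winv map_cat rev_cat. Qed.

Lemma winvK d : involutive (@winv d).
Proof.
move=> s; rewrite /winv map_rev revK -map_comp.
by rewrite -[RHS]map_id; apply: eq_map => -[i e] /=; rewrite negbK.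
Qed.

Lemma winv_cons d (x : gen d) s : winv (x :: s) = winv s ++ [:: flip x].
Proof. by rewrite -cat1s winv_cat. Qed.

Lemma evalK1 d (s : seq (gen d)) u : 1 < d -> eval (winv s) (eval s u) = u.
Proof.
move=> hd; elim: s u => [|x s IH] u //=.
by rewrite winv_cons eval_cat eval_cons1 IH /eval /= gen_actK.
Qed.

Lemma evalK2 d (s : seq (gen d)) u : 1 < d -> eval s (eval (winv s) u) = u.
Proof. by move=> hd; rewrite -{1}(winvK s) evalK1. Qed.

Definition cw d (c : seq (gen d) * seq (gen d) * bool) :=
  if c.2 then winv (wcomm c.1.1 c.1.2) else wcomm c.1.1 c.1.2.
Definition Wc d (cs : seq (seq (gen d) * seq (gen d) * bool)) := flatten (map (@cw d) cs).

Lemma in_commE d (f : seq 'I_d -> seq 'I_d) : in_comm f <-> exists cs, eval (Wc cs) =1 f.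
Proof. by []. Qed.

Lemma IC_ext d (f g : seq 'I_d -> seq 'I_d) : in_comm f -> f =1 g -> in_comm g.
Proof. by case=> cs h e; exists cs => u; rewrite h e. Qed.

Lemma IC_id d : @in_comm d id.
Proof. by exists [::]. Qed.

Lemma IC_comp d (f g : seq 'I_d -> seq 'I_d) :
  in_comm f -> in_comm g -> in_comm (fun u => g (f u)).
Proof.
case=> c1 h1 [c2 h2]; exists (c1 ++ c2) => u.
by rewrite map_cat flatten_cat eval_cat h1 h2.
Qed.

Lemma IC_comm d (a b : seq (gen d)) : in_comm (eval (wcomm a b)).
Proof. by exists [:: (a, b, false)] => u; rewrite /= cats0. Qed.

Lemma winv_wcomm d (a b : seq (gen d)) : winv (wcomm a b) = wcomm b a.
Proof. by rewrite /wcomm !winv_cat !winvK !catA. Qed.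

Lemma IC_cw d c : in_comm (eval (@cw d c)).
Proof. rewrite /cw; case: c.2; rewrite ?winv_wcomm; exact: IC_comm. Qed.

Lemma IC_cwinv d c : in_comm (eval (winv (@cw d c))).
Proof. rewrite /cw; case: c.2; rewrite ?winvK ?winv_wcomm; exact: IC_comm. Qed.

Lemma IC_Winv d cs : in_comm (eval (winv (@Wc d cs))).
Proof.
elim: cs => [|c cs IH]; first exact: IC_id.
apply: IC_ext (IC_comp IH (IC_cwinv c)) _ => u.
by rewrite /Wc /= winv_cat eval_cat.
Qed.

Lemma eval_winv_ext d (X Y : seq (gen d)) : 1 < d -> eval X =1 eval Y -> eval (winv X) =1 eval (winv Y).
Proof.
move=> hd h u; rewrite -{1}(evalK2 Y u hd) -h evalK1 //.
Qed.

Lemma IC_inv d (X : seq (gen d)) : 1 < d -> in_comm (eval X) -> in_comm (eval (winv X)).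
Proof.
move=> hd [cs h]; apply: IC_ext (IC_Winv cs) _.
by apply: eval_winv_ext => // u; rewrite h.
Qed.

Definition cnj d (u : seq (gen d)) (g : seq 'I_d -> seq 'I_d) :=
  fun w => eval u (g (eval (winv u) w)).

Lemma conj_comm d (u a b : seq (gen d)) : 1 < d ->
  cnj u (eval (wcomm a b)) =1 eval (wcomm (winv u ++ a ++ u) (winv u ++ b ++ u)).
Proof.
move=> hd w; rewrite /cnj /wcomm !winv_cat !winvK !eval_cat.
by rewrite !evalK1.
Qed.

Lemma IC_conj d (u : seq (gen d)) g : 1 < d -> in_comm g -> in_comm (cnj u g).
Proof.
move=> hd [cs h].
suff : in_comm (cnj u (eval (Wc cs))).
  by move=> H; apply: IC_ext H _ => w; rewrite /cnj h.
elim: cs {h} => [|c cs IH].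
  apply: (@IC_ext d id); first exact: IC_id. by move=> w; rewrite /cnj (_ : Wc [::] = [::]) // evalK2.
have Hc : in_comm (cnj u (eval (cw c))).
  rewrite /cw; case: c.2.
  + apply: IC_ext (IC_comm (winv u ++ c.1.2 ++ u) (winv u ++ c.1.1 ++ u)) _.
    by move=> w; rewrite winv_wcomm -conj_comm.
  + apply: IC_ext (IC_comm (winv u ++ c.1.1 ++ u) (winv u ++ c.1.2 ++ u)) _.
    by move=> w; rewrite -conj_comm.
apply: IC_ext (IC_comp Hc IH) _.
by move=> w; rewrite /cnj /Wc /= eval_cat evalK1.
Qed.

Definition eqc d (s t : seq (gen d)) := in_comm (eval (winv t ++ s)).

Lemma eqc_refl d (s : seq (gen d)) : 1 < d -> eqc s s.
Proof. by move=> hd; apply: (@IC_ext d id); [exact: IC_id | move=> u; rewrite eval_cat evalK2]. Qed.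

Lemma eqc_ev d (s t : seq (gen d)) : 1 < d -> eval s =1 eval t -> eqc s t.
Proof.
move=> hd h; apply: (@IC_ext d id); first exact: IC_id.
by move=> u; rewrite eval_cat h evalK2.
Qed.

Lemma eqc_sym d (s t : seq (gen d)) : 1 < d -> eqc s t -> eqc t s.
Proof.
move=> hd h; have := IC_inv hd h.
by rewrite /eqc winv_cat winvK.
Qed.

Lemma eqc_trans d (s t u : seq (gen d)) : 1 < d -> eqc s t -> eqc t u -> eqc s u.
Proof.
move=> hd h1 h2; apply: IC_ext (IC_comp h2 h1) _ => w.
by rewrite !eval_cat evalK1.
Qed.

Lemma eqc_catl d (u s t : seq (gen d)) : 1 < d -> eqc s t -> eqc (u ++ s) (u ++ t).
Proof.
move=> hd h; apply: IC_ext h _ => w.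
by rewrite /eqc winv_cat !eval_cat evalK2.
Qed.

Lemma eqc_catr d (u s t : seq (gen d)) : 1 < d -> eqc s t -> eqc (s ++ u) (t ++ u).
Proof.
move=> hd h; apply: IC_ext (IC_conj u hd h) _ => w.
by rewrite /cnj winv_cat !eval_cat.
Qed.

Lemma eqc_swap d (s t : seq (gen d)) : 1 < d -> eqc (s ++ t) (t ++ s).
Proof.
move=> hd; apply: IC_ext (IC_comm s t) _ => w.
by rewrite /eqc /wcomm winv_cat !catA.
Qed.

Lemma eqc_cancel d (x : gen d) s : 1 < d -> eqc (x :: flip x :: s) s.
Proof.
move=> hd; apply: eqc_ev => // u.
by rewrite eval_cons1 eval_cons1 gen_actK.
Qed.

Lemma wpow_step d (i : 'I_d) e n : 1 < d -> eqc ((i,e) :: wpow i n) (wpow i (n + sgn e)%R).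
Proof.
move=> hd; case: e; case: n => k.
- case: k => [|k].
  + rewrite (_ : (Posz 0 + sgn true)%R = Negz 0); last by rewrite /sgn; lia.
    exact: eqc_refl.
  + rewrite (_ : (Posz k.+1 + sgn true)%R = Posz k); last by rewrite /sgn; lia.
    exact: (eqc_cancel (i, true)).
- rewrite (_ : (Negz k + sgn true)%R = Negz k.+1); last by rewrite /sgn !NegzE; lia.
  exact: eqc_refl.
- rewrite (_ : (Posz k + sgn false)%R = Posz k.+1); last by rewrite /sgn; lia.
  exact: eqc_refl.
- case: k => [|k].
  + rewrite (_ : (Negz 0 + sgn false)%R = Posz 0); last by rewrite /sgn NegzE; lia.
    exact: (eqc_cancel (i, false) [::]).
  + rewrite (_ : (Negz k.+1 + sgn false)%R = Negz k); last by rewrite /sgn !NegzE; lia.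
    exact: (eqc_cancel (i, false)).
Qed.

Definition upd d (v : 'I_d -> int) (x : gen d) :=
  fun j => if j == x.1 then (v j + sgn x.2)%R else v j.
Definition repl d (l : seq 'I_d) (v : 'I_d -> int) := flatten [seq wpow i (v i) | i <- l].

Lemma repl_step d (l : seq 'I_d) v x : 1 < d -> uniq l -> x.1 \in l ->
  eqc (x :: repl l v) (repl l (upd v x)).
Proof.
move=> hd; elim: l => [|i l IH] //= /andP[nil ul].
have Hrest : x.1 \notin l -> repl l v = repl l (upd v x).
  move=> nx; rewrite /repl; congr flatten; apply/eq_in_map => j jl /=; rewrite /upd.
  by case: (j =P x.1) => // ej; rewrite -ej jl in nx.
rewrite /repl /= -!/(repl l _).
rewrite in_cons; case: (x.1 =P i) => [ex|nex] /= hin.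
- have -> : upd v x i = (v i + sgn x.2)%R by rewrite /upd ex eqxx.
  rewrite -Hrest; last by rewrite ex.
  clear IH Hrest hin; case: x ex => xi xe /= ->.
  exact: (eqc_catr _ hd (wpow_step i xe (v i) hd)).
- have ne : (i == x.1) = false by apply/eqP => e; apply: nex.
  have -> : upd v x i = v i by rewrite /upd ne.
  apply: (eqc_trans hd (t := wpow i (v i) ++ x :: repl l v)).
    have := eqc_catr (repl l v) hd (eqc_swap [:: x] (wpow i (v i)) hd).
    by rewrite -!catA.
  exact: (eqc_catl _ hd (IH ul hin)).
Qed.

Lemma part1 d (s : seq (gen d)) : 1 < d -> exists v : 'I_d -> int, eqc s (rep v).
Proof.
move=> hd; elim: s => [|x s [v IH]].
  exists (fun _ => 0%R).
  rewrite (_ : rep _ = [::]); first exact: eqc_refl.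
  by rewrite /rep; elim: (enum 'I_d).
exists (upd v x).
apply: (eqc_trans hd (eqc_catl [:: x] hd IH)).
rewrite /rep -/(repl _ v) -/(repl _ (upd v x)) cat1s.
apply: repl_step => //; [exact: enum_uniq | by rewrite mem_enum].
Qed.

Lemma exc_cat d (s t : seq (gen d)) m : exc (s ++ t) m = (exc s m + exc t m)%R.
Proof. elim: s => [|x s IH] /=; [by rewrite GRing.add0r | by rewrite IH GRing.addrA]. Qed.

Lemma exc_winv d (s : seq (gen d)) m : exc (winv s) m = (- exc s m)%R.
Proof.
elim: s => [|x s IH] //=; rewrite winv_cons exc_cat IH /=.
by case: (x.1 == m); case: x.2; rewrite /sgn /=; lia.
Qed.

Lemma exc_wcomm d (a b : seq (gen d)) m : exc (wcomm a b) m = 0%R.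
Proof. by rewrite /wcomm !exc_cat !exc_winv; lia. Qed.

Lemma exc_Wc d cs m : exc (@Wc d cs) m = 0%R.
Proof.
elim: cs => [|c cs IH] //=; rewrite /Wc /= exc_cat -/(Wc cs) IH /cw.
by case: c.2; rewrite ?exc_winv exc_wcomm; lia.
Qed.

Lemma exc_nseq d k (x : gen d) m : exc (nseq k x) m = (k%:Z * (if x.1 == m then sgn x.2 else 0))%R.
Proof. elim: k => [|k IH] /=; [by rewrite GRing.mul0r | rewrite IH; lia]. Qed.

Lemma exc_wpow d (i : 'I_d) n m : exc (wpow i n) m = if i == m then n else 0%R.
Proof.
case: n => k; rewrite /wpow exc_nseq /=; case: (i == m); rewrite /sgn ?NegzE; lia.
Qed.

Lemma exc_rep d (v : 'I_d -> int) m : exc (rep v) m = v m.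
Proof.
have H : forall l : seq 'I_d, exc (flatten [seq wpow i (v i) | i <- l]) m =
   (\sum_(i <- l) (if i == m then v i else 0))%R.
  elim=> [|i l IH]; first by rewrite big_nil.
  by rewrite /= exc_cat IH big_cons exc_wpow.
rewrite /rep H big_enum /= (bigD1 m) //= eqxx big1 ?GRing.addr0 //.
by move=> i /negbTE ->.
Qed.

Definition off d (p q : 'I_d) (b : bool) := q = if b then ordS p else p.

Lemma tr_o d (i p : 'I_d) : p != i -> p != ordS i -> tr i p = p.
Proof. by move=> /negbTE h1 /negbTE h2; rewrite /tr h1 h2. Qed.

Lemma SS_neq d (i : 'I_d) : 2 < d -> (ordS (ordS i) == i) = false.
Proof. by move=> hd; apply: negbTE; apply: F2. Qed.
Lemma S_neq d (i : 'I_d) : 2 < d -> (ordS i == i) = false.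
Proof. by move=> hd; apply: negbTE; apply: F1; apply: ltnW. Qed.
Lemma S_neq' d (i : 'I_d) : 2 < d -> (i == ordS i) = false.
Proof. by move=> hd; rewrite eq_sym S_neq. Qed.
Lemma SS_neq' d (i : 'I_d) : 2 < d -> (i == ordS (ordS i)) = false.
Proof. by move=> hd; rewrite eq_sym SS_neq. Qed.
Lemma SSS_neq d (i : 'I_d) : 2 < d -> (ordS (ordS i) == ordS i) = false.
Proof. by move=> hd; rewrite (inj_eq (@ordS_inj d)) S_neq. Qed.
Lemma SSS_neq' d (i : 'I_d) : 2 < d -> (ordS i == ordS (ordS i)) = false.
Proof. by move=> hd; rewrite eq_sym SSS_neq. Qed.

Ltac ssimp hd := rewrite ?(S_neq _ hd) ?(S_neq' _ hd) ?(SS_neq _ hd) ?(SS_neq' _ hd)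
   ?(SSS_neq _ hd) ?(SSS_neq' _ hd) ?(inj_eq (@ordS_inj _)) ?eqxx ?orbF ?orFb.

Lemma Lpp d (i p p' : 'I_d) b : 2 < d -> off p p' b -> mv i p ->
  mv (tr i p) (tr p p') -> off (tr i p) (tr p p') b.
Proof.
move=> hd; have hd1 : 1 < d by apply: ltnW.
rewrite /off /mv => -> /orP[] /eqP -> {p}; case: b; rewrite ?tr_self ?tr_S //.
all: by ssimp hd.
Qed.
Lemma Lmm d (i p p' : 'I_d) e : 2 < d -> off p p' e -> mv i p ->
  mv (tr i p) p' -> off (tr i p) (tr (tr i p) p') e.
Proof.
move=> hd; have hd1 : 1 < d by apply: ltnW.
rewrite /off /mv => -> /orP[] /eqP -> {p}; case: e; rewrite ?tr_self ?tr_S //.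
all: by ssimp hd.
Qed.

Lemma Lbd d (i1 i2 p p' : 'I_d) b : 2 < d -> off p p' b -> mv i1 p -> i2 != i1 ->
  mv i2 (tr i1 p) -> mv (tr i2 (tr i1 p)) (tr p p') ->
  off (tr i2 (tr i1 p)) (tr (tr i2 (tr i1 p)) (tr p p')) (~~ b).
Proof.
move=> hd; have hd1 : 1 < d by apply: ltnW.
rewrite /off /mv => -> /orP[] /eqP -> {p}.
- rewrite tr_self => ne /orP[] /eqP E; last by move: ne; rewrite (ordS_inj E) eqxx.
  subst i2; rewrite tr_self; case: b; rewrite ?tr_self ?tr_S //=.
  + ssimp hd => /eqP H; rewrite /tr; ssimp hd; by rewrite -H eqxx.
  + by ssimp hd.
- rewrite tr_S // => ne /orP[] /eqP E; first by move: ne; rewrite E eqxx.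
  subst i1; rewrite tr_S //; case: b; rewrite ?tr_self ?tr_S //=.
  + by ssimp hd.
  + ssimp hd => /eqP H; by rewrite H tr_self.
Qed.

Fixpoint allmv d (s : seq (gen d)) (p : 'I_d) : bool :=
  match s with [::] => true | x :: s' => mv x.1 p && allmv s' (tr x.1 p) end.

Fixpoint redw d (s : seq (gen d)) : bool :=
  match s with
  | x :: ((y :: _) as s') => (y != flip x) && redw s'
  | _ => true
  end.

Fixpoint nodp (s : seq bool) : bool :=
  match s with
  | a :: ((b :: _) as s') => ~~ (a && ~~ b) && nodp s'
  | _ => true
  end.

Lemma size_full d (s : seq (gen d)) p : size (sect s p) = size s -> allmv s p.
Proof.
elim: s p => [|x s IH] p //=.
case: (mv x.1 p) => /=; first by move=> [] /IH.
by move=> h; have := size_sect s (tr x.1 p); rewrite h ltnn.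
Qed.

Lemma sect_mv d (x : gen d) s p : mv x.1 p -> sect (x :: s) p = sl x p :: sect s (tr x.1 p).
Proof. by move=> /= ->. Qed.

Lemma nodp_sect d (r : seq (gen d)) p : allmv r p -> redw (sect r p) -> nodp (map snd r).
Proof.
elim: r p => [|x r IH] p //= /andP[m1 am].
rewrite m1; case: r IH am => [|y r] IH am //=.
move: am => /= /andP[m2 am]; rewrite m2 => /andP[h1 h2].
have hn : nodp (map snd (y :: r)).
  by apply: (IH (tr x.1 p)); rewrite /= ?m2 //.
move: hn => /= ->; rewrite andbT.
move: h1; rewrite /sl /flip; case: x.2; case: y.2 => //=.
by rewrite eqxx.
Qed.
Lemma nodp_neg d (x : gen d) r : x.2 -> nodp (map snd (x :: r)) -> all (fun y => y.2) r.
Proof.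
elim: r x => [|y r IH] x //= hx /andP[h1 h2].
have hy : y.2 by move: h1; rewrite hx /=; case: y.2.
by rewrite hy /=; apply: (IH y).
Qed.

Lemma off_uniq d (p q : 'I_d) b : 1 < d -> off p q b -> off p q (~~ b) -> False.
Proof.
rewrite /off => hd ->; case: b => /= /eqP; last by rewrite eq_sym (negbTE (F1 p hd)).
by rewrite (negbTE (F1 p hd)).
Qed.

Lemma Nseg d (r : seq (gen d)) p p' e : 2 < d -> allmv r p -> allmv (sect r p) p' ->
  all (fun y => y.2) r -> off p p' e -> off (lam r p) (lam (sect r p) p') e.
Proof.
move=> hd; elim: r p p' => [|x r IH] p p' //= /andP[m1 am].
rewrite m1 /= => /andP[m2 am2] /andP[hx hall] ho.
apply: IH => //.
move: m2; rewrite /sl hx /= => m2.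
exact: Lmm.
Qed.

Lemma Cseg d (r : seq (gen d)) p p' b : 2 < d -> allmv r p -> allmv (sect r p) p' ->
  redw r -> nodp (map snd r) -> has (fun y => y.2) r ->
  (forall x r', r = x :: r' -> x.2 = false) ->
  off p p' b -> off (lam r p) (lam (sect r p) p') b -> False.
Proof.
move=> hd; have hd1 : 1 < d by apply: ltnW.
elim: r p p' => [|x r IH] p p' //= /andP[m1 am].
rewrite m1 /= => /andP[m2 am2] hred hnd hhas hhd ho hfin.
have hx : x.2 = false by apply: (hhd x r).
have slx : sl x p = (p, false) by rewrite /sl hx.
rewrite hx /= in m2 am2 hfin hhas hnd.
clear hhd; case: r IH am am2 hred hnd hhas hfin => [|y r] IH am am2 hred hnd hhas hfin.
  by move: hhas.
move: am => /= /andP[m3 am]; move: am2; rewrite /= ?m3 /= => /andP[m4 am2].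
case hy: y.2.
-
  clear IH.
  have ne : y.1 != x.1.
    move: hred => /andP[h _]; apply: contra h => /eqP e; apply/eqP.
    by rewrite /flip hx; case: y e hy {hhas hnd hfin m3 m4 am am2} => ? ? /= -> ->.
  rewrite hy in m4 am2.
  have H2 := Lbd hd ho m1 ne m3 m4.
  have hall : all (fun z => z.2) r.
    by apply: (nodp_neg hy); move: hnd => /=.
  have := Nseg hd am am2 hall H2.
  move: hfin; rewrite /= m3 /sl hy /= => hfin H3.
  exact: (off_uniq hd1 hfin H3).
-
  rewrite hy in m4 am2.
  have H1 := Lpp hd ho m1 m4.
  apply: (IH (tr x.1 p) (tr p p')) => //.
  + by rewrite /= m3 am.
  + by rewrite /= m3 /sl hy /= m4 am2.
  + by move: hred => /andP[_ ->].
  + by move=> z r' [<- _].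
Qed.
Lemma Kmix d (r : seq (gen d)) p p' : 2 < d -> redw r -> allmv r p ->
  allmv (sect r p) p' -> redw (sect r p) -> lam r p = p -> lam (sect r p) p' = p' ->
  all (fun y => ~~ y.2) r || all (fun y => y.2) r.
Proof.
move=> hd hr ha haf hrf hl hlf.
have hnd := nodp_sect ha hrf.
case: r hr ha haf hrf hl hlf hnd => [|x r] // hr ha haf hrf hl hlf hnd.
case hx : x.2.
  by apply/orP; right; rewrite /= hx; exact: (nodp_neg hx hnd).
case: (boolP (all (fun y => ~~ y.2) (x :: r))) => // hn.
exfalso.
have hhas : has (fun y => y.2) (x :: r).
  by move: hn; rewrite -has_predC; apply: sub_has => y /=; rewrite negbK.
move: (ha) => /= /andP[m1 _].
move: (haf); rewrite /= m1 /= /sl hx /= => /andP[m2 _].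
have ho : off p p' (p' == ordS p).
  rewrite /off; case: (p' =P ordS p) => // ne; move: m2; rewrite /mv => /orP[/eqP //|/eqP //].
apply: (Cseg hd ha haf hr hnd hhas _ ho); first by move=> z r' [<- _].
by rewrite hl hlf.
Qed.

Lemma rel_sect d (r : seq (gen d)) p : 1 < d -> eval r =1 id ->
  lam r p = p /\ eval (sect r p) =1 id.
Proof.
move=> hd h; split.
  by have := h [:: p]; rewrite eval_cons // => -[].
by move=> u; have := h (p :: u); rewrite eval_cons // => -[].
Qed.

Lemma nonred d (s : seq (gen d)) : ~~ redw s -> exists u x v, s = u ++ x :: flip x :: v.
Proof.
elim: s => [|x s IH] //; case: s IH => [|y s] IH //=.
rewrite negb_and negbK => /orP[/eqP ->|/IH [u [z [v e]]]].
  by exists [::], x, s.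
by exists (x :: u), z, v; rewrite e.
Qed.

Lemma exc_flip d (x : gen d) m : (exc [:: x; flip x] m = 0)%R.
Proof. by rewrite /= /flip /=; case: (x.1 == m); case: x.2; rewrite /sgn /=; lia. Qed.

Lemma ex_zero d (r : seq (gen d)) : 1 < d -> odd d ->
  (forall p m, exc (sect r p) m = 0%R) -> forall m, exc r m = 0%R.
Proof.
move=> hd hodd h; apply: alt_zero => // j.
have := sum_exc r (ordS j) hd.
rewrite exS_ordS big1; last by move=> p _; apply: h.
by move=> e; rewrite -e.
Qed.

Definition csg d (e : bool) (s : seq (gen d)) := all (fun y => y.2 == e) s.

Lemma csg_sect d e (s : seq (gen d)) p : csg e s -> csg e (sect s p).
Proof.
elim: s p => [|x s IH] p //= /andP[hx hs].
by case: (mv x.1 p) => /=; rewrite ?hx IH.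
Qed.

Lemma two_full d (s : seq (gen d)) i p q : 2 < d ->
  ((p == i) && (q == ordS i)) || ((p == ordS i) && (q == i)) ->
  allmv s p -> allmv s q -> all (fun y => y.1 == i) s.
Proof.
move=> hd; have hd1 : 1 < d by apply: ltnW.
elim: s p q => [|x s IH] p q //= hpq /andP[m1 a1] /andP[m2 a2].
have hx : x.1 == i.
  move: hpq m1 m2; rewrite /mv.
  case/orP => /andP[/eqP -> /eqP ->] /orP[] /eqP E1 /orP[] /eqP E2.
  all: try by rewrite E1 eqxx.
  all: try by rewrite -E2 eqxx.
  all: try (rewrite E1 in E2; move/eqP: E2; ssimp hd; done).
  all: try (rewrite -E1 in E2; move/eqP: E2; ssimp hd; done).
  all: try (move: E1 E2 => /eqP; ssimp hd; done).
  all: try (move: E2 => /esym E2; rewrite E1 in E2; move/eqP: E2; ssimp hd; done).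
  all: idtac.
rewrite hx /=; apply: (IH (tr x.1 p) (tr x.1 q)) => //.
move/eqP: hx => ->; move: hpq => /orP[] /andP[/eqP -> /eqP ->].
  by rewrite tr_self tr_S // !eqxx orbT.
by rewrite tr_self tr_S // !eqxx.
Qed.


Lemma two_exist d (s : seq (gen d)) : 1 < d -> 0 < size s ->
  (forall p, size (sect s p) = 0 \/ size (sect s p) = size s) ->
  exists p q, [/\ p != q, size (sect s p) = size s & size (sect s q) = size s].
Proof.
move=> hd hs h01; have hsum := sum_size s hd.
case: (boolP [exists p, size (sect s p) == size s]) => [/existsP [p /eqP hp]|hn]; last first.
  exfalso; move: hsum; rewrite big1; first by lia.
  move=> p _; case: (h01 p) => // e.
  by move: hn; rewrite negb_exists => /forallP /(_ p); rewrite e eqxx.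
case: (boolP [exists q, (q != p) && (size (sect s q) == size s)]) => [/existsP [q /andP [nq /eqP hq]]|hn].
  by exists p, q; split => //; rewrite eq_sym.
exfalso; move: hsum; rewrite (bigD1 p) //= big1; first by rewrite hp; lia.
move=> q nq; case: (h01 q) => // e.
by move: hn; rewrite negb_exists => /forallP /(_ q); rewrite nq e eqxx.
Qed.

Lemma P_core d (s : seq (gen d)) e : 2 < d ->
  (forall s' : seq (gen d), size s' < size s -> 0 < size s' -> csg e s' -> eval s' =1 id -> False) ->
  0 < size s -> csg e s -> eval s =1 id ->
  exists i, all (fun y => y.1 == i) s.
Proof.
move=> hd IH hs hc hr; have hd1 : 1 < d by apply: ltnW.
have h01 : forall p, size (sect s p) = 0 \/ size (sect s p) = size s.
  move=> p; have [_ hrp] := rel_sect p hd1 hr.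
  have := size_sect s p; rewrite leq_eqVlt => /orP[/eqP -> |lt]; first by right.
  case: (posnP (size (sect s p))) => [->|pos]; first by left.
  by exfalso; apply: (IH _ lt pos (csg_sect p hc) hrp).
have [p [q [npq hp hq]]] := two_exist hd1 hs h01.
have ap := size_full hp; have aq := size_full hq.
case: s IH hs hc hr h01 hp hq ap aq => [|x s] // IH hs hc hr h01 hp hq ap aq.
exists x.1; apply: (two_full (p := p) (q := q)) => //.
move: ap aq => /= /andP[m1 _] /andP[m2 _]; move: m1 m2; rewrite /mv.
case/orP => /eqP E1; case/orP => /eqP E2; subst.
all: try by rewrite !eqxx ?orbT.
all: by rewrite eqxx in npq.
Qed.

Lemma size_allmv d (t : seq (gen d)) q : allmv t q -> size (sect t q) = size t.
Proof. by elim: t q => [|z t IH] q //= /andP[-> /IH] /= ->. Qed.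

Lemma allmv_idx d (t : seq (gen d)) i q : 1 < d -> all (fun z => z.1 == i) t -> mv i q -> allmv t q.
Proof.
move=> hd; elim: t q => [|z t IHt] q //= /andP[/eqP -> ht] mq; rewrite mq /=.
apply: IHt => //; move: mq; rewrite /mv => /orP[] /eqP ->.
  by rewrite tr_self eqxx orbT.
by rewrite tr_S // eqxx.
Qed.

Lemma Pthm d n : 2 < d -> forall (s : seq (gen d)) e,
  size s <= n -> 0 < size s -> csg e s -> eval s =1 id -> False.
Proof.
move=> hd; have hd1 : 1 < d by apply: ltnW.
elim: n => [|n IHn] s e hn hs; first by move: hn hs; rewrite leqn0 => /eqP ->.
case: (ltnP (size s) n.+1) => [lt|ge]; first by apply: (IHn s e); rewrite -ltnS.
have hL : size s = n.+1 by apply/eqP; rewrite eqn_leq hn ge.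
move=> hc hr.
have IH : forall s' : seq (gen d), size s' < size s -> 0 < size s' -> csg e s' -> eval s' =1 id -> False.
  by move=> s' lt; apply: IHn; rewrite -ltnS -hL.
have [i hi] := P_core hd IH hs hc hr.
case: s IH hn hs hc hr hi hL ge => [|x s] // IH hn hs hc hr hi hL ge.
have hx : x.1 = i by move: hi => /= /andP[/eqP].
case: s IH hn hs hc hr hi hL ge => [|y s] IH hn hs hc hr hi hL ge.
  have [hl _] := rel_sect x.1 hd1 hr.
  by move: hl; rewrite /= tr_self => /eqP; rewrite (negbTE (F1 _ hd1)).
have hy : y.1 = i by move: hi => /= /andP[_ /andP[/eqP]].
pose p := x.1.
have mp : mv x.1 p by rewrite /mv eqxx.
have my : mv y.1 (tr x.1 p) by rewrite hy -hx /p tr_self /mv eqxx orbT.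
set f := sect (x :: y :: s) p.
have [_ hrf] := rel_sect p hd1 hr.
have hf : size f = size (x :: y :: s).
  rewrite /f size_allmv //; apply: (allmv_idx hd1 (i := i)) => //.
  by rewrite /p hx /mv eqxx.
have hf0 : 0 < size f by rewrite hf.
have [j hj] := P_core hd (fun s' lt => IH s' (leq_trans lt (eq_leq hf))) hf0
  (csg_sect p hc) hrf.
move: hj; rewrite /f /= mp my /= /sl.
have hxy : x.2 = y.2 by move: hc => /= /and3P[/eqP -> /eqP ->].
rewrite hxy hy -hx /p tr_self tr_S //.
case: y.2 => /= /and3P [/eqP e1 /eqP e2 _].
- by move: (F1 x.1 hd1); rewrite e1 -e2 eqxx.
- by move: (F1 x.1 hd1); rewrite e2 -e1 eqxx.
Qed.

Lemma rel_exc d (r : seq (gen d)) : 2 < d -> odd d -> eval r =1 id -> forall m, exc r m = 0%R.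
Proof.
move=> hd hodd; have hd1 : 1 < d by apply: ltnW.
suff H : forall n (r : seq (gen d)), size r <= n -> eval r =1 id -> forall m, exc r m = 0%R.
  by apply: (H (size r)).
elim=> [|n IHn] {}r hn hr m.
  by move: hn; rewrite leqn0 => /nilP ->.
case: (ltnP (size r) n.+1) => [lt|ge]; first exact: (IHn r).
have hL : size r = n.+1 by apply/eqP; rewrite eqn_leq hn ge.
have Hred : forall s : seq (gen d), size s <= size r -> eval s =1 id -> ~~ redw s ->
    forall m, exc s m = 0%R.
  move=> s hs hrs /nonred [u [x [v E]]] m'; subst s.
  have -> : exc (u ++ [:: x, flip x & v]) m' = exc (u ++ v) m'.
    by rewrite !exc_cat (exc_cat [:: x; flip x] v) exc_flip GRing.add0r.
  apply: (IHn (u ++ v)).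
    by move: hs; rewrite hL !size_cat /= !addnS ltnS => /ltnW.
  by move=> w; have := hrs w; rewrite !eval_cat eval_cons1 eval_cons1 gen_actK.
case: (boolP (redw r)) => hrr; last exact: (Hred r (leqnn _) hr hrr).
apply: (ex_zero hd1 hodd) => p m'.
have [hlp hrf] := rel_sect p hd1 hr.
set f := sect r p.
have hfs : size f <= size r by apply: size_sect.
case: (ltnP (size f) (size r)) => [lt|ge'].
  by apply: (IHn f) => //; rewrite -ltnS -hL.
have hfL : size f = size r by apply/eqP; rewrite eqn_leq hfs ge'.
case: (boolP (redw f)) => hrf2; last exact: (Hred f (eq_leq hfL) hrf hrf2).
case: (boolP [exists q, size (sect f q) == size f]) => [/existsP [q /eqP hq]|hn2].
- exfalso.
  have ap := size_full hfL; have aq := size_full hq.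
  have [hlq _] := rel_sect q hd1 hrf.
  have := Kmix hd hrr ap aq hrf2 hlp hlq.
  have hpos : 0 < size r by rewrite hL.
  case/orP => hall.
  + apply: (Pthm hd (leqnn _) hpos (e := false)) => //.
    by apply: sub_all hall => y /=; case: y.2.
  + apply: (Pthm hd (leqnn _) hpos (e := true)) => //.
    by apply: sub_all hall => y /=; case: y.2.
- apply: (ex_zero hd1 hodd) => q m''.
  have [_ hrq] := rel_sect q hd1 hrf.
  apply: (IHn (sect f q)) => //.
  have := size_sect f q; rewrite leq_eqVlt => /orP[/eqP e|lt].
    by move: hn2; rewrite negb_exists => /forallP /(_ q); rewrite e eqxx.
  by move: lt; rewrite hfL hL ltnS.
Qed.

Lemma part2 d (v w : 'I_d -> int) : 2 < d -> odd d ->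
  in_comm (eval (winv (rep v) ++ rep w)) -> v =1 w.
Proof.
move=> hd hodd [cs h] m.
have hd1 : 1 < d by apply: ltnW.
have R : eval ((winv (rep v) ++ rep w) ++ winv (Wc cs)) =1 id.
  by move=> u; rewrite eval_cat -h evalK1.
have := rel_exc hd hodd R m.
rewrite !exc_cat !exc_winv exc_Wc !exc_rep; lia.
Qed.

Theorem theorem4p3 (d : nat) (hd : 3 <= d) (hodd : odd d) :
  (forall s : seq (gen d), exists v : 'I_d -> int,
      in_comm (eval (winv (rep v) ++ s)))
  /\
  (forall v w : 'I_d -> int,
      in_comm (eval (winv (rep v) ++ rep w)) -> v =1 w).
Proof.
split.
- by move=> s; apply: part1; apply: ltnW.
- by move=> v w; apply: part2.
Qed.
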